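(* Let $T\in B(\mathcal{F})$ be a block-diagonal operator and let $(A_n)_{n\ge0}$ be its sequence of $\mathcal{C}$-approximants (defined in the context). Then for every $n\ge0$ and every $m\ge0$, \[A_n|_{\mathcal{F}_m}=\begin{cases}T|_{\mathcal{F}_m}&\text{if }m\le n,\\ (T|_{\mathcal{F}_n})\otimes I_{m-n}&\text{if }m>n,\end{cases}\] where $(T|_{\mathcal{F}_n})\otimes I_{m-n}$ acts on $\mathcal{F}_m=\mathcal{F}_n\otimes\mathcal{F}_{m-n}$ and $I_{m-n}$ is the identity of $\mathcal{F}_{m-n}$.
   Context: $d\ge2$; $\xi_1,\ldots,\xi_d$ is the standard orthonormal basis of $\mathbb{C}^d$. $\mathcal{F}=\bigoplus_{n\ge0}\mathcal{F}_n$ is the full Fock space, $\mathcal{F}_0=\mathbb{C}\Omega$, $\mathcal{F}_n=(\mathbb{C}^d)^{\otimes n}$ with the usual inner product. $L_j\eta=\xi_j\otimes\eta$ (and $L_j\Omega=\xi_j$) are the left creation operators, $\mathcal{C}=C^*(L_1,\ldots,L_d)$. $T$ is block-diagonal if $T(\mathcal{F}_n)\subseteq\mathcal{F}_n$ for all $n$. The $\mathcal{C}$-approximants of $T$ are defined recursively by $A_0=\langle T\Omega,\Omega\rangle I_{\mathcal{F}}$ and, for $n\ge0$, $A_{n+1}=A_n+\sum c_{i_1,\ldots,i_{n+1};j_1,\ldots,j_{n+1}}(L_{i_1}\cdots L_{i_{n+1}})(L_{j_1}\cdots L_{j_{n+1}})^*$, the sum over all $1\le i_1,\ldots,i_{n+1},j_1,\ldots,j_{n+1}\le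 d$, with $c_{i_1,\ldots,i_{n+1};j_1,\ldots,j_{n+1}}=\langle T(\xi_{j_1}\otimes\cdots\otimes\xi_{j_{n+1}}),\xi_{i_1}\otimes\cdots\otimes\xi_{i_{n+1}}\rangle-\delta_{i_{n+1},j_{n+1}}\langle T(\xi_{j_1}\otimes\cdots\otimes\xi_{j_n}),\xi_{i_1}\otimes\cdots\otimes\xi_{i_n}\rangle$ (for $n=0$ the second inner product is $\langle T\Omega,\Omega\rangle$). *)

(* Defs.v *)
From mathcomp Require Import all_boot all_algebra.
From mathcomp Require Import reals.
From mathcomp Require Export complex.
Set Implicit Arguments. Unset Strict Implicit. Unset Printing Implicit Defensive.
Import GRing.Theory Num.Theory.
Local Open Scope ring_scope.

(* Vectors of the (algebraic) full Fock space over C^d are coefficient functions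
   on words: x w is the coordinate of x along xi_{w_1} (x) ... (x) xi_{w_k}
   (the empty word corresponds to the vacuum Omega). *)
Definition word (d : nat) := seq 'I_d.
Definition vect (d : nat) (C : Type) := word d -> C.

Section Fock.
Variables (d : nat) (C : numClosedFieldType).

Definition xi (u : word d) : vect d C := fun w => (w == u)%:R.

Definition inF (m : nat) (x : vect d C) : Prop :=
  forall w : word d, size w != m -> x w = 0.

Definition finsupp (x : vect d C) : Prop :=
  exists s : seq (word d), forall w, w \notin s -> x w = 0.

Definition addv (x y : vect d C) : vect d C := fun w => x w + y w.
Definition scalev (a : C) (x : vect d C) : vect d C := fun w => a * x w.

(* left creation operator L_j : eta |-> xi_j (x) eta *)
Definition Lop (j : 'I_d) (x : vect d C) : vect d C :=
  fun w => match w with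
           | [::] => 0
           | i :: w' => if i == j then x w' else 0
           end.

(* its adjoint L_j^* : (L_j^* x)(w) = <x, L_j xi_w> = x (j :: w) *)
Definition Lstar (j : 'I_d) (x : vect d C) : vect d C := fun w => x (j :: w).

Definition Lword (I : word d) : vect d C -> vect d C :=
  foldr (fun i f => Lop i \o f) id I.

Definition Lword_adj (J : word d) : vect d C -> vect d C :=
  foldr (fun j f => f \o Lstar j) id J.

Variable T : vect d C -> vect d C.

Definition coef (n : nat) (I J : (n.+1).-tuple 'I_d) : C :=
  T (xi J) I
  - (tnth I ord_max == tnth J ord_max)%:R * T (xi (take n J)) (take n I).

Fixpoint approx (n : nat) : vect d C -> vect d C :=
  match n with
  | 0 => fun x => scalev (T (xi [::]) [::]) x
  | n'.+1 => fun x => addv (approx n' x)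
      (fun w => \sum_(I : n'.+1.-tuple 'I_d) \sum_(J : n'.+1.-tuple 'I_d)
                   coef I J * Lword I (Lword_adj J x) w)
  end.

(* (S|_{F_n}) (x) I_{m-n} acting on F_m = F_n (x) F_{m-n}, where
   xi_u (x) xi_v is identified with xi_{u ++ v}:
   xi_{u++v} |-> (S xi_u) (x) xi_v, and (f (x) g)(w) = f (take n w) * g (drop n w). *)
Definition tensI (n m : nat) (S : vect d C -> vect d C) (x : vect d C) : vect d C :=
  fun w => \sum_(u : n.-tuple 'I_d) \sum_(v : (m - n).-tuple 'I_d)
             x (u ++ v) * (S (xi u) (take n w) * xi v (drop n w)).

End Fock.

Definition fock_linear (d : nat) (C : numClosedFieldType) (T : vect d C -> vect d C) :=
  forall (a : C) (x y : vect d C), finsupp x -> finsupp y ->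
    T (addv (scalev a x) y) = addv (scalev a (T x)) (T y).

Definition block_diagonal (d : nat) (C : numClosedFieldType) (T : vect d C -> vect d C) :=
  forall (n : nat) (x : vect d C), inF n x -> inF n (T x).

Definition blocks_bounded (d : nat) (C : numClosedFieldType) (T : vect d C -> vect d C) :=
  exists M : C, 0 <= M /\
    forall (n : nat) (x : vect d C), inF n x ->
      \sum_(w : n.-tuple 'I_d) `|T x w| ^+ 2 <= M * \sum_(w : n.-tuple 'I_d) `|x w| ^+ 2.

(* Main.v *)
Require Import Defs.
From mathcomp Require Import all_boot all_algebra.
From mathcomp Require Import reals complex zify.
From Stdlib Require Import FunctionalExtensionality.
Import GRing.Theory Num.Theory.
Local Open Scope ring_scope.
Set Implicit Arguments. Unset Strict Implicit.

Section H.
Variables (d : nat) (C : numClosedFieldType).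

Lemma Lword_adjE (J : word d) (y : vect d C) w : Lword_adj J y w = y (J ++ w).
Proof. by elim: J y => [|j J IH] y //=; rewrite IH. Qed.

Lemma LwordE (I : word d) (y : vect d C) w :
  Lword I y w = if take (size I) w == I then y (drop (size I) w) else 0.
Proof.
elim: I w => [|i I IH] w /=; first by rewrite take0 drop0.
case: w => [|a w'] //=.
rewrite IH eqseq_cons.
by case: (a == i); case: (take _ w' == I).
Qed.

Lemma xi_decomp m (x : vect d C) : inF m x ->
  forall w, x w = \sum_(J : m.-tuple 'I_d) x J * xi C J w.
Proof.
move=> hx w; case: (eqVneq (size w) m) => hs.
  rewrite (bigD1 (Tuple (introT eqP hs))) //= /xi eqxx mulr1 big1 ?addr0 //.
  move=> J hJ; rewrite (_ : (w == J) = false) ?mulr0 //.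
  apply/negbTE; apply: contra hJ => /eqP e; apply/eqP/val_inj => /=; by rewrite e.
rewrite hx // big1 // => J _; rewrite /xi (_ : (w == J) = false) ?mulr0 //.
apply/negbTE; apply: contra hs => /eqP ->; by rewrite size_tuple.
Qed.
End H.
Section H2.
Variables (d : nat) (C : numClosedFieldType) (T : vect d C -> vect d C).
Hypothesis TL : fock_linear T.

Lemma T0 : T (fun _ => 0) = (fun _ => 0).
Proof.
have f0 : finsupp (fun _ : word d => (0:C)) by exists [::].
have := TL 1 f0 f0.
have -> : Defs.addv (scalev 1 (fun _ : word d => (0:C))) (fun _ => 0) = (fun _ => 0).
  by apply: functional_extensionality => w; rewrite /Defs.addv /scalev mulr0 addr0.
move=> e; apply: functional_extensionality => w.
have := congr1 (fun f => f w) e; rewrite /Defs.addv /scalev mul1r => h.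
have := congr1 (fun t => t - T (fun _ => 0) w) h; rewrite subrr addrK; by move=> /esym.
Qed.

Lemma T_sum (r : seq (word d)) (f : word d -> C) :
  T (fun w => \sum_(u <- r) f u * xi C u w) = fun w => \sum_(u <- r) f u * T (xi C u) w.
Proof.
elim: r => [|u r IH].
  rewrite (_ : (fun w => _) = fun _ => 0); last by apply: functional_extensionality => w; rewrite big_nil.
  by rewrite T0; apply: functional_extensionality => w; rewrite big_nil.
have fxi : finsupp (xi C u) by exists [:: u] => w; rewrite inE /xi => /negbTE ->.
have fr : finsupp (fun w => \sum_(u <- r) f u * xi C u w).
  exists r => w hw; rewrite big_seq big1 // => v hv; rewrite /xi.
  by rewrite (_ : (w == v) = false) ?mulr0 //; apply/negbTE; apply: contra hw => /eqP ->.
have := TL (f u) fxi fr.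
rewrite (_ : Defs.addv _ _ = fun w => \sum_(v <- u :: r) f v * xi C v w); last first.
  by apply: functional_extensionality => w; rewrite big_cons.
move=> ->; rewrite IH; apply: functional_extensionality => w.
by rewrite /Defs.addv /scalev big_cons.
Qed.
End H2.
Section H3.
Variables (d : nat) (C : numClosedFieldType).

Lemma takeP n (J : n.+1.-tuple 'I_d) : size (take n J) == n.
Proof. by rewrite size_take size_tuple ltnSn. Qed.

Lemma sum_split n (F : n.+1.-tuple 'I_d -> C) :
  \sum_(J : n.+1.-tuple 'I_d) F J =
  \sum_(J : n.-tuple 'I_d) \sum_(j : 'I_d) F (rcons_tuple J j).
Proof.
rewrite pair_big /=.
rewrite (reindex (fun p : n.-tuple 'I_d * 'I_d => rcons_tuple p.1 p.2)) //=.
exists (fun J : n.+1.-tuple 'I_d => (Tuple (takeP J), tnth J ord_max)).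
  case=> t j _ /=; congr pair.
    by apply: val_inj => /=; rewrite -cats1 take_size_cat // size_tuple.
  by rewrite (tnth_nth j) /= nth_rcons size_tuple ltnn eqxx.
move=> J _; apply: val_inj => /=.
rewrite (tnth_nth (tnth J ord_max)) /= -take_nth ?size_tuple //.
by rewrite take_oversize // size_tuple.
Qed.
End H3.

Section H4.
Variables (d : nat) (C : numClosedFieldType) (T : vect d C -> vect d C).

Lemma tnth_rcons_max n (t : n.-tuple 'I_d) j : tnth (rcons_tuple t j) ord_max = j.
Proof. by rewrite (tnth_nth j) /= nth_rcons size_tuple ltnn eqxx. Qed.

Lemma val_rcons_tuple n (t : n.-tuple 'I_d) j : val (rcons_tuple t j) = rcons t j.
Proof. by []. Qed.

Lemma approx_off m n (x : vect d C) w : inF m x -> size w != m -> approx T n x w = 0.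
Proof.
move=> hx hw; elim: n => [|n IH] /=; first by rewrite /scalev hx // mulr0.
rewrite /Defs.addv IH add0r big1 // => I _; rewrite big1 // => J _.
rewrite LwordE Lword_adjE size_tuple; case: eqP => [e|_]; last by rewrite mulr0.
rewrite hx ?mulr0 //.
have := congr1 size e; rewrite size_take size_tuple size_cat size_drop size_tuple.
move: hw => /eqP hw; case: ltnP => h1 e2; apply/eqP=> e3; apply: hw; rewrite -e3 subnKC //; first exact: ltnW. by rewrite e2.
Qed.

Lemma approx_form m n (x : vect d C) w : inF m x -> size w = m -> (n <= m)%N ->
  approx T n x w = \sum_(J : n.-tuple 'I_d) x (J ++ drop n w) * T (xi C J) (take n w).
Proof.
move=> hx hw; elim: n => [|n IH] hn /=.
  rewrite /scalev (big_pred1 [tuple]) => [|J]; last by rewrite [J]tuple0 /= eqxx.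
  by rewrite /= drop0 take0 mulrC.
have hs : size (take n.+1 w) == n.+1 by by rewrite size_takel ?hw.
rewrite /Defs.addv (IH (ltnW hn)).
rewrite (bigD1 (Tuple hs)) // [X in _ + (_ + X)]big1 ?addr0; last first.
  move=> I; rewrite andTb => hI; rewrite big1 // => J _; rewrite LwordE size_tuple.
  rewrite (_ : (take n.+1 w == I) = false); first by rewrite mulr0.
  by apply/negbTE; apply: contra hI => /eqP e; apply/eqP/val_inj; exact: esym e.
set I0 := Tuple hs.
have hI0 : val I0 = take n.+1 w by [].
under eq_bigr => J _ do rewrite LwordE size_tuple hI0 eqxx Lword_adjE /coef mulrBl.
rewrite sumrB.
set a := tnth I0 ord_max.
have hw' : (n < size w)%N by rewrite hw.
have hI0' : tval I0 = take n.+1 w by [].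
have ha : a = nth a w n by rewrite {1}/a (tnth_nth a) hI0' nth_take.
rewrite [X in _ - X]sum_split.
rewrite (_ : \sum_(J : n.-tuple 'I_d) \sum_(j : 'I_d) _ =
   \sum_(J : n.-tuple 'I_d) x (J ++ drop n w) * T (xi C J) (take n w)).
  rewrite addrC subrK; apply: eq_bigr => J _; by rewrite hI0 mulrC.
apply: eq_bigr => J _.
rewrite (bigD1 a) // big1 ?Monoid.mulm1; last first.
  move=> j; rewrite andTb => hj; rewrite tnth_rcons_max.
  by rewrite eq_sym (negbTE hj) mul0r mul0r.
rewrite tnth_rcons_max eqxx mul1r val_rcons_tuple.
rewrite -cats1 take_size_cat ?size_tuple // hI0 take_takel ?leqnSn //.
by rewrite -catA (drop_nth a hw') -ha mulrC.
Qed.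
End H4.

Section H5.
Variables (d : nat) (C : numClosedFieldType) (T : vect d C -> vect d C).

Lemma size_take_le k (w : word d) : (size (take k w) <= size w)%N.
Proof. by rewrite size_take_min geq_minr. Qed.

Lemma approx_stable m k (x : vect d C) w : size w = m ->
  approx T (m + k) x w = approx T m x w.
Proof.
move=> hw; elim: k => [|k IH]; first by rewrite addn0.
rewrite addnS /= /Defs.addv IH big1 ?addr0 // => I _; rewrite big1 // => J _.
rewrite LwordE size_tuple; case: eqP => [e|_]; last by rewrite mulr0.
have := size_take_le (m + k).+1 w; rewrite e size_tuple hw => h.
by move: h; rewrite ltnNge leq_addr.
Qed.

Lemma T_decomp m (x : vect d C) : fock_linear T -> inF m x ->
  forall w, T x w = \sum_(J : m.-tuple 'I_d) x J * T (xi C J) w.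
Proof.
move=> TL hx.
have ex : x = (fun w => \sum_(u <- [seq val J | J <- enum {: m.-tuple 'I_d}]) x u * xi C u w).
  apply: functional_extensionality => w; rewrite big_map big_enum (xi_decomp hx w).
  by apply: eq_bigl => J.
rewrite {1}ex (T_sum TL) => w; rewrite big_map big_enum; by apply: eq_bigl => J.
Qed.
End H5.

Unset Implicit Arguments. Set Strict Implicit.

Theorem lemma3p2 (R : realType) (d : nat) (T : vect d R[i] -> vect d R[i]) :
  (2 <= d)%N ->
  fock_linear T -> block_diagonal T -> blocks_bounded T ->
  forall (n m : nat) (x : vect d R[i]), inF m x ->
    ((m <= n)%N -> approx T n x = T x) /\
    ((n < m)%N -> approx T n x = tensI n m T x).
Proof.
move=> _ TL TB _ n m x hx; split => hnm; apply: functional_extensionality => w;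
  case: (eqVneq (size w) m) => hw.
- rewrite -(subnKC hnm) (approx_stable _ _ _ hw) (approx_form _ hx hw (leqnn m)).
  rewrite (T_decomp TL hx); apply: eq_bigr => J _.
  by rewrite take_oversize ?hw // drop_oversize ?hw // cats0 mulrC.
- by rewrite (approx_off _ _ hx hw) (TB _ _ hx w hw).
- rewrite (approx_form _ hx hw (ltnW hnm)) /tensI; apply: eq_bigr => u _.
  have hv : size (drop n w) == (m - n)%N by rewrite size_drop hw.
  have hv0 : val (Tuple hv) = drop n w by [].
  rewrite (bigD1 (Tuple hv)) // big1 ?Monoid.mulm1; last first.
    move=> v; rewrite andTb => hv1; rewrite /xi (_ : (drop n w == v) = false) ?mulr0 //.
    by apply/negbTE; apply: contra hv1 => /eqP e; apply/eqP/val_inj; rewrite hv0.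
  by rewrite /xi hv0 eqxx mulr1.
- rewrite (approx_off _ _ hx hw) /tensI big1 // => u _; rewrite big1 // => v _.
  rewrite /xi (_ : (drop n w == v) = false) ?mulr0 //.
  apply/negbTE/eqP => e; move: (congr1 size e); rewrite size_drop size_tuple => e'.
  move/eqP: hw => hw; apply: hw.
  have h1 : (n < size w)%N by rewrite -subn_gt0 e' subn_gt0.
  by rewrite -(subnK (ltnW h1)) e' subnK // ltnW.
Qed.
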